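(* Let $\beta\ne0$, and consider the episodic MDP with finite state space, tabular deterministic policy $\mu_\theta(s)=\theta_s$, soft value functions $V^\beta_{\mu_\theta},Q^\beta_{\mu_\theta}$ and behavior state weights $\rho_b$ as in the context. Define $g(\mu_\theta)$ as the parameter vector whose block for state $s$ is $$g(\mu_\theta)_s=\rho_b(s)\,\nabla_aQ^\beta_{\mu_\theta}(s,a)\big|_{a=\mu_\theta(s)}\in\mathbb{R}^m$$ (i.e. $g(\mu_\theta)=\sum_{s}\rho_b(s)\nabla_\theta\mu_\theta(s)\nabla_aQ^\beta_{\mu_\theta}(s,a)|_{a=\mu_\theta(s)}$), and let $\theta'=\theta+\alpha\,g(\mu_\theta)$. Then there exists $\epsilon>0$ such that for all $0<\alpha<\epsilon$, $$V^\beta_{\mu_\theta}(s)\le V^\beta_{\mu_{\theta'}}(s)\qquad\text{for all }s\in\mathcal S.$$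
   Context: Episodic MDP: finite state space $\mathcal S$, action space $\mathcal A=\mathbb{R}^m$, transition probabilities $p(s'|s,a)$ (a probability mass function on $\mathcal S$ for each $(s,a)$) and reward $r(s,a)$, with $a\mapsto p(s'|s,a)$ and $a\mapsto r(s,a)$ continuously differentiable. There is a set $\mathcal S_{\rm term}\subset\mathcal S$ of absorbing terminal states with $r(s,a)=0$ and $p(\mathcal S_{\rm term}|s,a)=1$ for $s\in\mathcal S_{\rm term}$, and an integer $T$ such that from any state, under any sequence of actions, the state lies in $\mathcal S_{\rm term}$ after at most $T$ transitions with probability 1. Tabular (linear) deterministic policy: $\theta=(\theta_s)_{s\in\mathcal S}$ with $\theta_s\in\mathbb{R}^m$ and $\mu_\theta(s)=\theta_s$. Soft value functions of a deterministic policy $\mu$: $V^\beta_\mu(s)=\frac1\beta\log\mathbb{E}\big[e^{\beta\sum_{t\ge1}r_t}\mid s_1=s\big]$ and $Q^\beta_\mu(s,a)=\frac1\beta\log\mathbb{E}\big[e^{\beta\sum_{t\ge1}r_t}\mid s_1=s,a_1=a\big]$, where $a_t=\mu(s_t)$ for $t\ge2$ (and $t\ge1$ for $V$); the sums are a.s. finite. They satisfy $V^\beta_\mu(s)=Q^\beta_\mu(s,\mu(s))$ and $Q^\beta_\mu(s,a)=r(s,a)+\frac1\beta\log\sum_{s'}p(s'|s,a)e^{\beta V^\beta_\mu(s')}$. $\rho_b:\mathcal S\to[0,\infty)$ is the state distribution of an arbitrary behavior policy (any nonnegative weights). *)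

(* Defs.v *)
From HB Require Import structures.
From mathcomp Require Import all_boot all_order all_algebra.
From mathcomp Require Import all_classical all_reals all_analysis.
Set Implicit Arguments. Unset Strict Implicit. Unset Printing Implicit Defensive.
Import Order.TTheory GRing.Theory Num.Theory.
Import numFieldNormedType.Exports.
Local Open Scope ring_scope.

Section MDP.
Variables (R : realType) (S : finType) (m T : nat).

Definition C1 (f : 'rV[R]_m -> R) : Prop :=
  (forall a, differentiable f a) /\ (forall v : 'rV[R]_m, continuous (fun a => 'D_v f a)).

Definition path_act (mu : S -> 'rV[R]_m) (a1 : 'rV[R]_m)
  (w : {ffun 'I_T.+1 -> S}) (i : 'I_T.+1) : 'rV[R]_m :=
  if val i == 0%N then a1 else mu (w i).

(* E[ exp(beta * sum_{t>=1} r_t) | s_1 = s, a_1 = a1 ], a_t = mu(s_t) for t >= 2,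
   written as the finite sum over all state paths s_1..s_{T+1} (after at most T
   transitions the chain is in an absorbing zero-reward terminal state, so
   the rewards beyond time T+1 vanish). *)
Definition exp_return (p : S -> 'rV[R]_m -> S -> R) (r : S -> 'rV[R]_m -> R)
  (beta : R) (mu : S -> 'rV[R]_m) (s : S) (a1 : 'rV[R]_m) : R :=
  \sum_(w : {ffun 'I_T.+1 -> S} | w ord0 == s)
     ((\prod_(t < T) p (w (widen_ord (leqnSn T) t))
                       (path_act mu a1 w (widen_ord (leqnSn T) t))
                       (w (lift ord0 t)))
      * expR (beta * \sum_(i < T.+1) r (w i) (path_act mu a1 w i))).

Definition Qsoft p r beta mu s a : R := ln (exp_return p r beta mu s a) / beta.
Definition Vsoft p r beta mu s : R := Qsoft p r beta mu s (mu s).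

Definition gradQ p r beta mu s (a : 'rV[R]_m) : 'rV[R]_m :=
  \row_(j < m) 'D_(delta_mx 0 j) (Qsoft p r beta mu s) a.

Definition mu_of (theta : S -> 'rV[R]_m) : S -> 'rV[R]_m := theta.

Definition gpg p r beta (rho : S -> R) (theta : S -> 'rV[R]_m) (s : S) : 'rV[R]_m :=
  rho s *: gradQ p r beta (mu_of theta) s (mu_of theta s).

End MDP.

(* Main.v *)
Require Import Defs.
From HB Require Import structures.
From mathcomp Require Import all_boot all_order all_algebra.
From mathcomp Require Import all_classical all_reals all_analysis.
From mathcomp Require Import ring lra.
Import Order.TTheory GRing.Theory Num.Theory.
Import numFieldNormedType.Exports.
Set Implicit Arguments. Unset Strict Implicit. Unset Printing Implicit Defensive.
Local Open Scope ring_scope.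

Section Comb.
Variables (R : realType) (S : finType) (m : nat).
Variables (p : S -> 'rV[R]_m -> S -> R) (r : S -> 'rV[R]_m -> R) (beta : R).
Hypothesis psum : forall s a, \sum_(s' : S) p s a s' = 1.

Fixpoint W (n : nat) (mu : S -> 'rV[R]_m) (s : S) (a : 'rV[R]_m) : R :=
  expR (beta * r s a) * \sum_(s' : S) p s a s' *
    (match n with 0 => 1 | n'.+1 => W n' mu s' (mu s') end).

Definition consf n (s : S) (w : {ffun 'I_n.+1 -> S}) : {ffun 'I_n.+2 -> S} :=
  [ffun i => if unlift ord0 i is Some j then w j else s].
Definition tailf n (w : {ffun 'I_n.+2 -> S}) : {ffun 'I_n.+1 -> S} :=
  [ffun j => w (lift ord0 j)].

Lemma consf0 n s w (i : 'I_n.+2) : val i = 0%N -> consf s w i = s.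
Proof.
move=> h; have -> : i = ord0 by apply: val_inj.
by rewrite /consf ffunE unlift_none.
Qed.

Lemma consfS n s w (i : 'I_n.+2) (j : 'I_n.+1) : val i = (val j).+1 -> consf s w i = w j.
Proof.
move=> h; have -> : i = lift ord0 j by apply: val_inj; rewrite /= h.
by rewrite /consf ffunE liftK.
Qed.

Lemma pa_mu n (mu : S -> 'rV[R]_m) s' (w : {ffun 'I_n.+1 -> S}) i : w ord0 = s' ->
  path_act mu (mu s') w i = mu (w i).
Proof.
rewrite /path_act; case: eqP => // h <-.
by have -> : i = ord0 by apply: val_inj.
Qed.

Lemma exp_return_S n (mu : S -> 'rV[R]_m) s a :
  exp_return n.+1 p r beta mu s a =
  expR (beta * r s a) * \sum_(s' : S) p s a s' * exp_return n p r beta mu s' (mu s').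
Proof.
rewrite /exp_return.
rewrite (reindex_onto (@consf n s) (@tailf n)); last first.
  move=> w /eqP w0; apply/ffunP => i; rewrite /consf /tailf ffunE.
  case: unliftP => [j ->|->]; by rewrite ?ffunE.
rewrite (eq_bigl xpredT); last first.
  move=> w; rewrite (consf0 _ _ (i:=ord0)) // eqxx /=.
  apply/eqP/ffunP => j; rewrite /tailf ffunE; apply: consfS => //.
rewrite (partition_big (fun w : {ffun 'I_n.+1 -> S} => w ord0) xpredT) //.
rewrite big_distrr /=; apply: eq_bigr => s' _.
rewrite mulrA big_distrr /=; apply: eq_bigr => w /eqP w0.
rewrite big_ord_recl big_ord_recl.
rewrite (consf0 _ _ (i := widen_ord _ ord0)) //.
rewrite (consfS _ _ (i := lift ord0 ord0) (j := ord0)) // w0.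
rewrite /path_act /= -/(path_act _ _ _ _).
have Hp : \prod_(i < n) p (consf s w (widen_ord (leqnSn n.+1) (lift ord0 i)))
       (path_act mu a (consf s w) (widen_ord (leqnSn n.+1) (lift ord0 i)))
       (consf s w (lift ord0 (lift ord0 i))) =
    \prod_(t < n) p (w (widen_ord (leqnSn n) t))
       (path_act mu (mu s') w (widen_ord (leqnSn n) t)) (w (lift ord0 t)).
  apply: eq_bigr => i _.
  rewrite (consfS _ _ (j := widen_ord (leqnSn n) i)) //.
  rewrite (consfS _ _ (i := lift ord0 (lift ord0 i)) (j := lift ord0 i)) //.
  rewrite pa_mu // /path_act /=.
  by rewrite (consfS _ _ (j := widen_ord (leqnSn n) i)).
have Hr : \sum_(i < n.+1) r (consf s w (lift ord0 i)) (path_act mu a (consf s w) (lift ord0 i))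
     = \sum_(i < n.+1) r (w i) (path_act mu (mu s') w i).
  apply: eq_bigr => i _; rewrite pa_mu // /path_act /=.
  by rewrite (consfS _ _ (j := i)).
rewrite Hp Hr.
rewrite mulrDr expRD.
rewrite (consf0 _ _ (i := ord0)) //.
rewrite /path_act /=.
by rewrite /path_act; ring.
Qed.


Lemma exp_return_W n (mu : S -> 'rV[R]_m) s a :
  exp_return n p r beta mu s a = W n mu s a.
Proof.
elim: n s a => [|n IH] s a; last first.
  rewrite exp_return_S /=; congr (_ * _); apply: eq_bigr => s' _.
  by rewrite IH.
rewrite /exp_return /= (big_pred1 [ffun=> s]); last first.
  move=> w /=; apply/eqP/eqP => [h|->]; last by rewrite ffunE.
  by apply/ffunP => i; rewrite ffunE (ord1 i).
rewrite big_ord0 mul1r big_ord1 ffunE /path_act /=.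
under eq_bigr do rewrite mulr1.
by rewrite psum mulr1.
Qed.

Hypothesis pge0 : forall s a s', 0 <= p s a s'.

Definition Wc n (mu : S -> 'rV[R]_m) s' : R :=
  match n with 0 => 1 | n'.+1 => W n' mu s' (mu s') end.

Lemma W_form n (mu : S -> 'rV[R]_m) s a :
  W n mu s a = expR (beta * r s a) * \sum_(s' : S) p s a s' * Wc n mu s'.
Proof. by case: n. Qed.

Lemma sum_pos (c : S -> R) s a : (forall s', 0 < c s') -> 0 < \sum_(s' : S) p s a s' * c s'.
Proof.
move=> cp; rewrite lt_def sumr_ge0 ?andbT; last by move=> s' _; rewrite mulr_ge0 ?pge0 ?ltW.
apply/eqP => H0.
have Hz := psumr_eq0P (fun s' _ => mulr_ge0 (pge0 s a s') (ltW (cp s'))) H0.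
suff : \sum_(s' : S) p s a s' = 0 by rewrite psum => /eqP; rewrite oner_eq0.
apply: big1 => s' _.
by have := Hz s' isT; move/eqP; rewrite mulf_eq0 (gt_eqF (cp s')) orbF => /eqP.
Qed.

Lemma W_gt0 n (mu : S -> 'rV[R]_m) s a : 0 < W n mu s a.
Proof.
elim: n s a => [|n IH] s a; rewrite W_form mulr_gt0 ?expR_gt0 // sum_pos // => s'.
by rewrite /Wc.
Qed.
Variable Sterm : {set S}.
Hypothesis r0 : forall s a, s \in Sterm -> r s a = 0.
Hypothesis pterm : forall s a, s \in Sterm -> \sum_(s' in Sterm) p s a s' = 1.

Lemma pout s a s' : s \in Sterm -> s' \notin Sterm -> p s a s' = 0.
Proof.
move=> hs hs'; have := psum s a; rewrite (bigID (mem Sterm)) /= pterm //.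
move/(congr1 (fun x => x - 1)); rewrite addrC addrK subrr => h.
by apply: (psumr_eq0P _ h) => // i _.
Qed.

Lemma W_term n (mu : S -> 'rV[R]_m) s a : s \in Sterm -> W n mu s a = 1.
Proof.
elim: n s a => [|n IH] s a hs /=; rewrite r0 // mulr0 expR0 mul1r.
  by under eq_bigr do rewrite mulr1; rewrite psum.
rewrite -(psum s a); apply: eq_bigr => s' _.
case: (boolP (s' \in Sterm)) => h; first by rewrite IH // mulr1.
by rewrite pout // mul0r.
Qed.

Fixpoint safe (j : nat) (s : S) : Prop :=
  match j with 0 => s \in Sterm | j'.+1 => forall a s', 0 < p s a s' -> safe j' s' end.

Lemma W_safe j k (mu : S -> 'rV[R]_m) s a : safe j s -> W (j + k) mu s a = W j mu s a.
Proof.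
elim: j s a => [|j IH] s a hs; first by rewrite add0n !W_term.
rewrite addSn /=; congr (_ * _); apply: eq_bigr => s' _.
have [->|hp] := eqVneq (p s a s') 0; first by rewrite !mul0r.
rewrite IH //; apply: (hs a); by rewrite lt_neqAle eq_sym hp pge0.
Qed.

Lemma unsafe_path j s : ~ safe j s -> exists (f : nat -> S) (g : nat -> 'rV[R]_m),
  [/\ f 0%N = s, (forall t, (t < j)%N -> 0 < p (f t) (g t) (f t.+1)) & f j \notin Sterm].
Proof.
elim: j s => [|j IH] s /= hs.
  by exists (fun _ => s), (fun _ => 0); split => //; apply/negP.
move/existsNP: hs => [a]; move/existsNP => [s']; move/not_implyP => [hp hns].
have [f [g [f0 fp fj]]] := IH _ hns.
exists (fun t => if t is t'.+1 then f t' else s), (fun t => if t is t'.+1 then g t' else a).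
split => //; case => [|t] ht /=; first by rewrite f0.
exact: fp.
Qed.

Lemma all_safe T :
  (forall (w : {ffun 'I_T.+1 -> S}) (a : 'I_T -> 'rV[R]_m),
     (forall t : 'I_T, 0 < p (w (widen_ord (leqnSn T) t)) (a t) (w (lift ord0 t))) ->
     w ord_max \in Sterm) -> forall s, safe T s.
Proof.
move=> Hterm s; have [//|ns] := pselect (safe T s).
have [f [g [_ fp fT]]] := unsafe_path ns.
have := Hterm [ffun i : 'I_T.+1 => f i] (fun t => g t).
rewrite ffunE /= => H; suff: f T \in Sterm by rewrite (negbTE fT).
apply: H => t; rewrite !ffunE /= /bump /= add1n; exact: fp.
Qed.

Section Improve.
Variables (T : nat) (mu mu' : S -> 'rV[R]_m).
Hypothesis Himp : forall s, 0 <= beta * (W T mu s (mu' s) - W T mu s (mu s)).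

Lemma improve j s : (j <= T)%N -> safe j s ->
  0 <= beta * (W j mu' s (mu' s) - W j mu s (mu s)).
Proof.
elim: j s => [|j IH] s hj hs.
  by rewrite !W_term // subrr mulr0.
have Hj : 0 <= beta * (W j.+1 mu s (mu' s) - W j.+1 mu s (mu s)).
  by have := Himp s; rewrite -(subnKC hj) !W_safe.
rewrite (_ : W _ _ _ _ - _ = (W j.+1 mu' s (mu' s) - W j.+1 mu s (mu' s))
    + (W j.+1 mu s (mu' s) - W j.+1 mu s (mu s))); last by rewrite addrA subrK.
rewrite mulrDr addr_ge0 //= -mulrBr -sumrB mulrCA mulr_ge0 ?expR_ge0 //.
rewrite mulr_sumr sumr_ge0 // => s' _.
have [->|hp] := eqVneq (p s (mu' s) s') 0; first by rewrite !mul0r subrr mulr0.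
rewrite -mulrBr mulrCA mulr_ge0 //; apply: IH; first exact: ltnW.
apply: (hs (mu' s)); by rewrite lt_neqAle eq_sym hp pge0.
Qed.
End Improve.

End Comb.

Local Open Scope classical_set_scope.
Section An.
Variables (R : realType) (m : nat).

Lemma improve_dir (f : 'rV[R]_m -> R) a (c : R) : differentiable f a -> 0 <= c ->
  \forall h \near (0:R)^', 0 < h -> f a <= f (a + h *: (c *: \row_j 'D_(delta_mx 0 j) f a)).
Proof.
move=> df c0.
set g := \row_j 'D_(delta_mx 0 j) f a.
set d := c *: g.
have Hder : (fun h : R => h^-1 *: ((f \o shift a) (h *: d) - f a)) @ 0^' --> 'D_d f a.
  exact: (@diff_derivable _ _ _ f a d df).
have HD : 'D_d f a = c * \sum_(j < m) g ord0 j ^+ 2.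
  rewrite deriveE // {1}/d {1}(matrix_sum_delta g) big_ord1 linearZ linear_sum /=.
  rewrite -[c *: _]/(c * _) !mulr_sumr; apply: eq_bigr => j _; congr (c * _).
  rewrite linearZ /= -deriveE; last exact: df.
  by rewrite /g mxE expr2.
have : 0 <= c * \sum_(j < m) g ord0 j ^+ 2.
  by rewrite mulr_ge0 // sumr_ge0 // => j _; rewrite sqr_ge0.
rewrite le0r => /orP [/eqP L0 | Lpos].
  have -> : d = 0.
    move/eqP: L0; rewrite mulf_eq0 => /orP [/eqP c00|/eqP S0]; first by rewrite /d c00 scale0r.
    apply/matrixP => i j; rewrite (ord1 i) /d mxE.
    have H0 := psumr_eq0P (fun j _ => sqr_ge0 (g ord0 j)) S0; have := H0 j isT.
    by move/eqP; rewrite sqrf_eq0 => /eqP ->; rewrite mulr0 mxE.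
  by near=> h => _; rewrite scaler0 addr0.
rewrite -HD in Lpos.
have Hq := @cvgr_gt _ _ _ _ _ _ Hder _ Lpos.
near=> h => hpos.
have : 0 < h^-1 *: ((f \o shift a) (h *: d) - f a) by near: h; exact: Hq.
rewrite /= -[h^-1 *: _]/(h^-1 * _) pmulr_rgt0 ?invr_gt0 // subr_gt0 => /ltW.
by rewrite addrC.
Unshelve. all: by end_near.
Qed.

Lemma near_eps (P : R -> Prop) : (\forall h \near (0:R)^', P h) ->
  exists eps : R, 0 < eps /\ forall h, 0 < h < eps -> P h.
Proof.
rewrite near_withinE => /nbhs_ballP [e e0 H]; exists e; split => // h /andP [h0 he].
apply: H; last by rewrite gt_eqF.
by rewrite /ball /= sub0r normrN gtr0_norm.
Qed.

Variable S : finType.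
Lemma diff_G (q : S -> 'rV[R]_m -> R) (e : 'rV[R]_m -> R) (c : S -> R) (beta : R) a :
  (forall s', differentiable (q s') a) -> differentiable e a ->
  0 < expR (beta * e a) * \sum_s' q s' a * c s' ->
  differentiable (fun a => ln (expR (beta * e a) * \sum_s' q s' a * c s') / beta) a.
Proof.
move=> dq de G0.
have dG : differentiable (fun a => expR (beta * e a) * \sum_s' q s' a * c s') a.
  apply: differentiableM.
    apply: (@differentiable_comp _ _ _ _ (fun a => beta * e a) expR).
      exact: differentiableM.
    exact/derivable1_diffP/derivable_expR.
  have : forall l : seq S, differentiable (fun a => \sum_(s' <- l) q s' a * c s') a.
    elim => [|x l IH].
      under eq_fun do rewrite big_nil; exact: differentiable_cst.
    under eq_fun do rewrite big_cons.
    apply: differentiableD => //; apply: differentiableM => //; exact: differentiable_cst.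
  by move/(_ (index_enum S)).
apply: differentiableM; last exact: differentiable_cst.
apply: (differentiable_comp dG).
apply/derivable1_diffP; apply: ex_derive; exact: is_derive1_ln.
Qed.
End An.


Lemma rel_ln (R : realType) (beta x y : R) : beta != 0 -> 0 < x -> 0 < y ->
  (ln y / beta <= ln x / beta) = (0 <= beta * (x - y)).
Proof.
move=> hb hx hy; case: (ltgtP beta 0) => [bn|bp|b0]; last by rewrite b0 eqxx in hb.
  by rewrite ler_nM2r ?invr_lt0 // ler_ln ?posrE // nmulr_rge0 // subr_le0.
by rewrite ler_pM2r ?invr_gt0 // ler_ln ?posrE // pmulr_rge0 // subr_ge0.
Qed.

Theorem theorem3 (R : realType) (S : finType) (m T : nat) (Sterm : {set S})
  (p : S -> 'rV[R]_m -> S -> R) (r : S -> 'rV[R]_m -> R)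
  (beta : R) (rho : S -> R) (theta : S -> 'rV[R]_m) :
  beta != 0 ->
  (forall s a s', 0 <= p s a s') ->
  (forall s a, \sum_(s' : S) p s a s' = 1) ->
  (forall s s', C1 (fun a => p s a s')) ->
  (forall s, C1 (r s)) ->
  (forall s a, s \in Sterm -> r s a = 0) ->
  (forall s a, s \in Sterm -> \sum_(s' in Sterm) p s a s' = 1) ->
  (forall (w : {ffun 'I_T.+1 -> S}) (a : 'I_T -> 'rV[R]_m),
     (forall t : 'I_T, 0 < p (w (widen_ord (leqnSn T) t)) (a t) (w (lift ord0 t))) ->
     w ord_max \in Sterm) ->
  (forall s, 0 <= rho s) ->
  exists eps : R, 0 < eps /\
    forall alpha : R, 0 < alpha < eps ->
      let theta' := fun s => theta s + alpha *: gpg T p r beta rho theta s in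
      forall s : S,
        Vsoft T p r beta (mu_of theta) s <= Vsoft T p r beta (mu_of theta') s.
Proof.
move=> hb pge0 psum hpC hrC r0 pterm Hterm rho0.
have Hs : forall s, \forall h \near (0:R)^', 0 < h ->
    Qsoft T p r beta (mu_of theta) s (mu_of theta s) <=
    Qsoft T p r beta (mu_of theta) s (mu_of theta s + h *: gpg T p r beta rho theta s).
  move=> s; apply: improve_dir (rho0 s).
  have -> : Qsoft T p r beta (mu_of theta) s = fun a =>
      ln (expR (beta * r s a) * \sum_s' p s a s' * Wc p r beta T (mu_of theta) s') / beta.
    by apply: funext => a; rewrite /Qsoft exp_return_W // W_form.
  apply: diff_G; [move=> s'; exact: (hpC s s').1 | exact: (hrC s).1 |].
  by rewrite -W_form W_gt0.
have Hall0 := filter_forall _ Hs.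
have Hall := Hall0 ltac:(exact: _).
have [eps [e0 He]] := near_eps Hall.
exists eps; split => // alpha ha theta' s.
have Himp : forall s, 0 <= beta * (W p r beta T (mu_of theta) s (theta' s)
                                 - W p r beta T (mu_of theta) s (mu_of theta s)).
  move=> s0; rewrite -rel_ln // ?W_gt0 // -!exp_return_W //.
  exact: (He alpha ha s0 (proj1 (andP ha))).
have := improve psum pge0 r0 pterm Himp (leqnn T) (all_safe Hterm s).
by rewrite -rel_ln // ?W_gt0 // -!exp_return_W.
Qed.
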